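(* Let $q$ be a prime power, $e\ge 2$, $a\in\mathbb{F}_{q^e}^*$, and $\ell=q^{e-1}+\cdots+q+1$. Let $r$ and $s$ be positive integers with $r\equiv s\pmod{\ell}$. Suppose that $x^s(x^{q-1}+a)$ does not permute $\mathbb{F}_{q^e}$. If $\sum_{A\in S_{N,s}}\binom{N}{A}a^{N-A}\neq 0$ for some $N\in\{1,\dots,q^e-2\}$ with $q-1\mid N$, then $x^r(x^{q-1}+a)$ does not permute $\mathbb{F}_{q^e}$.
   Context: For a positive integer $t$ and an integer $N\ge 1$, $S_{N,t}=\{A\in\mathbb{Z}: A=\frac{j(q^e-1)-tN}{q-1}\text{ for some } j\in\mathbb{Z},\ 0\le A\le N\}$. Binomial coefficients are interpreted in $\mathbb{F}_{q^e}$. *)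

(* Defs.v *)
From HB Require Import structures.
From mathcomp Require Import all_boot all_order all_algebra all_field.
Set Implicit Arguments. Unset Strict Implicit. Unset Printing Implicit Defensive.
Import GRing.Theory.
Local Open Scope ring_scope.

(* A \in S_{N,t} (for q, e) : 0 <= A <= N and A = (j(q^e-1) - tN)/(q-1) for
   some integer j, i.e. (q-1) A = j (q^e - 1) - t N for some j : int,
   i.e. (q^e - 1) divides (q-1)A + tN in Z. *)
Definition inS (q e N t A : nat) : bool :=
  (A <= N)%N &&
  ((((q ^ e)%N)%:Z - 1) %| ((A%:Z) * ((q%:Z) - 1) + (t%:Z) * (N%:Z)))%Z.

Definition Ssum (F : fieldType) (q e N t : nat) (a : F) : F :=
  \sum_(0 <= A < N.+1 | inS q e N t A) ('C(N, A))%:R * a ^+ (N - A).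

Definition ell (q e : nat) : nat := (\sum_(i < e) q ^ i)%N.

(* Main.v *)
Require Import Defs.
From HB Require Import structures.
From mathcomp Require Import all_boot all_order all_algebra all_field.
From mathcomp Require cyclic.
From mathcomp Require Import zify ring.
Set Implicit Arguments. Unset Strict Implicit. Unset Printing Implicit Defensive.
Import GRing.Theory.
Local Open Scope ring_scope.

Lemma sum_pow (F : finFieldType) m : (0 < m)%N ->
  \sum_(x : F) x ^+ m = if (#|F|.-1 %| m)%N then (#|F|.-1)%:R else 0.
Proof.
move=> m0.
have n1gt0 : (0 < #|F|.-1)%N by rewrite -ltnS prednK ?finNzRing_gt1 // ltnW // finNzRing_gt1.
have unit (x : F) : x != 0 -> x ^+ #|F|.-1 = 1.
  move=> nz; apply: (mulIf nz); rewrite mul1r -exprSr prednK ?expf_card //.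
  by rewrite ltnW // finNzRing_gt1.
rewrite (bigD1 0) //= expr0n (gtn_eqF m0) add0r.
case: ifP => hd.
  rewrite (eq_bigr (fun _ => 1)) => [|x nz]; last first.
    by case/dvdnP: hd => c ->; rewrite mulnC exprM unit // expr1n.
  rewrite sumr_const -(cardC1 (0:F)).
  congr (_ *+ _); apply: eq_card => x; by rewrite !inE.
have /hasP[z zin zprim] : has #|F|.-1.-primitive_root (enum [pred x : F | x != 0]).
  apply: cyclic.has_prim_root => //.
  - by apply/allP => x; rewrite mem_enum inE => nz; rewrite unity_rootE unit.
  - exact: enum_uniq.
  - by rewrite -cardE cardC1.
move: zin; rewrite mem_enum inE => znz.
have zm : z ^+ m != 1 by rewrite -(prim_order_dvd zprim) hd.
set S := \sum_(i | _) _.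
have : z ^+ m * S = S.
  rewrite /S [RHS](reindex_inj (mulfI znz)) mulr_sumr /=.
  apply: eq_big => [x|x _]; first by rewrite mulf_eq0 (negbTE znz).
  by rewrite exprMn.
move=> /eqP; rewrite -subr_eq0 -{2}(mul1r S) -mulrBl mulf_eq0 subr_eq0 (negbTE zm) /=.
by move/eqP.
Qed.

Theorem lemma2p3 (F : finFieldType) (p k q e : nat)
  (hp : prime p) (hk : (0 < k)%N) (hq : q = (p ^ k)%N)
  (he : (2 <= e)%N) (hF : #|F| = (q ^ e)%N)
  (a : F) (ha : a != 0)
  (r s : nat) (hr : (0 < r)%N) (hs : (0 < s)%N)
  (hrs : r = s %[mod ell q e])
  (hnot : ~ bijective (fun x : F => x ^+ s * (x ^+ (q - 1) + a)))
  (hN : exists N : nat, [/\ (1 <= N)%N, (N <= q ^ e - 2)%N, (q - 1 %| N)%N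
                           & Ssum q e N s a != 0]) :
  ~ bijective (fun x : F => x ^+ r * (x ^+ (q - 1) + a)).
Proof.
move=> hbij; case: hN => N [N1 N2 hqN hS].
have q1 : (1 < q)%N.
  have : (p ^ 1 <= p ^ k)%N by rewrite leq_exp2l // prime_gt1.
  by rewrite expn1 -hq; apply: leq_trans; rewrite prime_gt1.
have nE : #|F|.-1 = ((q - 1) * ell q e)%N by rewrite hF predn_exp subn1.
have key1 : \sum_(x : F) (x ^+ r * (x ^+ (q - 1) + a)) ^+ N = 0.
  have -> : \sum_(x : F) (x ^+ r * (x ^+ (q - 1) + a)) ^+ N = \sum_(x : F) x ^+ N.
    by rewrite [RHS](reindex_inj (bij_inj hbij)).
  rewrite sum_pow //.
  case: ifP => // hd; exfalso; have := dvdn_leq N1 hd.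
  have : (1 < q ^ e)%N by rewrite -(exp1n e) ltn_exp2r // (leq_trans _ he).
  rewrite hF; move: N2; move: (q ^ e)%N => Q; clear; lia.
have key2 : \sum_(x : F) (x ^+ r * (x ^+ (q - 1) + a)) ^+ N
    = (#|F|.-1)%:R * Ssum q e N s a.
  have hmod : (r * N = s * N %[mod (q - 1) * ell q e])%N.
    case/dvdnP: hqN => c ->.
    rewrite !mulnA (mulnC (q - 1)%N) -!muln_modl ?subn_gt0 //.
    by rewrite -modnMml hrs modnMml.
  have hd (i : nat) : (#|F|.-1 %| r * N + (q - 1) * i)%N =
      (((q ^ e)%N)%:Z - 1 %| (i%:Z) * ((q%:Z) - 1) + (s%:Z) * (N%:Z))%Z.
    have -> : ((q ^ e)%N%:Z - 1 = Posz (q ^ e - 1))%Z.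
      by rewrite subzn // expn_gt0 (leq_trans _ q1).
    have -> : (q%:Z - 1 = Posz (q - 1))%Z by rewrite subzn // ltnW.
    have -> : (q ^ e - 1 = (q - 1) * ell q e)%N by rewrite -hF subn1 nE.
    rewrite -!PoszM -PoszD dvdzE /= nE.
    rewrite /dvdn -modnDml hmod modnDml; congr ((_ %% _) == 0)%N; lia.
  under eq_bigr => x _ do rewrite exprMn -exprM addrC exprDn mulr_sumr.
  rewrite exchange_big /= /Ssum big_mkord mulr_sumr [RHS]big_mkcond /=.
  apply: eq_bigr => i _.
  rewrite (eq_bigr (fun x => ('C(N, i))%:R * a ^+ (N - i) * x ^+ (r * N + (q - 1) * i))); last first.
    by move=> x _; rewrite -mulr_natl exprD -exprM; ring.
  rewrite -mulr_sumr sum_pow; last by rewrite (leq_trans _ (leq_addr _ _)) // muln_gt0 hr.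
  have hi : (i <= N)%N by rewrite -ltnS.
  rewrite /inS hi /= -hd.
  by case: ifP => _; ring.
have cnz : (#|F|.-1)%:R != 0 :> F.
  have hc : p \in [pchar F] by apply: (card_finPcharP (n := (k * e)%N)) => //; rewrite hF hq expnM.
  have n0 : (#|F|)%:R = 0 :> F.
    have ke : (0 < k * e)%N by rewrite muln_gt0 hk (leq_trans _ he).
    by rewrite hF hq -expnM natrX (pcharf0 hc) expr0n eqn0Ngt ke.
  apply/eqP => c0; move: n0.
  have : (0 < #|F|)%N by rewrite hF expn_gt0 (leq_trans _ q1).
  move=> /prednK <-; rewrite -addn1 natrD c0 add0r => /eqP; by rewrite oner_eq0.
by move: key1; rewrite key2 => /eqP; rewrite mulf_eq0 (negbTE cnz) (negbTE hS).
Qed.
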